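(* Let $T$ be a bipartite trigraph in $\mathcal F$. Then: (1) $T$ is either complete or has an even pair; (2) if $T$ is favorable, then $T$ has an even pair disjoint from its switchable component.
   Context: A trigraph $T$ consists of a finite set $V(T)$ and a map $\theta:\binom{V(T)}{2}\to\{-1,0,1\}$. Two distinct vertices $u,v$ are strongly adjacent if $\theta(uv)=1$, strongly antiadjacent if $\theta(uv)=-1$, and semiadjacent (a switchable pair) if $\theta(uv)=0$; they are adjacent if $\theta(uv)\in\{0,1\}$ and antiadjacent if $\theta(uv)\in\{0,-1\}$. $N(v)$ is the set of vertices adjacent to $v$. For $X\subseteq V(T)$, $T|X$ is the trigraph on $X$ with $\theta$ restricted, and $T\setminus X=T|(V(T)\setminus X)$. A clique is a set of pairwise adjacent vertices; a strongly stable set is a set of pairwise strongly antiadjacent vertices; $T$ is complete if $V(T)$ is a clique. The full realization of $T$ is the graph on $V(T)$ whose edges are the adjacent pairs. A path is a sequence of distinct vertices $p_1,\dots,p_k$ such that $p_i,p_j$ are adjacent when $|i-j|=1$ and antiadjacent when $|i-j|>1$; its length is $k-1$. A hole of length $k\ge5$ consists of vertices $h_1,\dots,h_k$ with $h_i,h_j$ adjacent if $|i-j|\in\{1,k-1\}$ and antiadjacent otherwise; an antihole is an induced subtrigraph whose complement (adjacency function $-\theta$) is a hole. $T$ is Berge if it contains no hole of odd length and no antihole of odd length. An even pair of $T$ is a strongly antiadjacent pair $\{u,v\}$ such that every path from $u$ to $v$ in $T$ has even length. $\Sigma(T)$ is the graph on $V(T)$ whose edges are the switchable pairs of $T$; a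 switchable component is a connected component of $\Sigma(T)$ with at least two vertices. $\mathcal F$ is the class of Berge trigraphs $T$ such that: (1) $T$ has at most one switchable component, and it has at most two edges; (2) if the switchable component has exactly one edge $xy$, then $N(x)\cap N(y)=\emptyset$ (it is called small); (3) if it has two edges, with $v$ the vertex of degree two in $\Sigma(T)$ and $x,y$ its neighbours, then $v$ is strongly anticomplete to $V(T)\setminus\{v,x,y\}$, $x$ is strongly antiadjacent to $y$, and $N(x)\cap N(y)=\{v\}$ (it is called light). For $T\in\mathcal F$, $D$ denotes the vertex set of its switchable component ($D=\emptyset$ if $T$ has no switchable pair). A pair $\{u,v\}$ is disjoint from the switchable component if $\{u,v\}\cap D=\emptyset$. A trigraph $T\in\mathcal F$ is favorable if (1) $|V(T)|\ge5$; (2) $T$ has a strongly antiadjacent pair $\{u,v\}$ disjoint from $D$; and (3) if $D=\{x,y\}$ is small, then at least one of $V(T)\setminus(D\cup N(x))$, $V(T)\setminus(D\cup N(y))$ is not a clique. $T$ is bipartite if $V(T)$ can be partitioned into two strongly stable sets. *)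

(* Defs.v *)
From mathcomp Require Import all_boot.
Set Implicit Arguments. Unset Strict Implicit. Unset Printing Implicit Defensive.

(* Values of theta: Plus = 1 (strongly adjacent), Zero = 0 (semiadjacent),
   Minus = -1 (strongly antiadjacent). *)
Inductive tval := Plus | Zero | Minus.

(* A trigraph on the finite vertex set V: a symmetric theta on pairs of
   vertices; the value of theta on the diagonal is never used. *)
Record trigraph (V : finType) := Trigraph {
  theta : V -> V -> tval;
  theta_sym : forall u v, theta u v = theta v u }.

Section Defs.
Variables (V : finType) (T : trigraph V).

Definition strongly_adjacent (u v : V) := u <> v /\ theta T u v = Plus.
Definition strongly_antiadjacent (u v : V) := u <> v /\ theta T u v = Minus.
Definition semiadjacent (u v : V) := u <> v /\ theta T u v = Zero.
Definition adjacent (u v : V) := u <> v /\ theta T u v <> Minus.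
Definition antiadjacent (u v : V) := u <> v /\ theta T u v <> Plus.

Definition is_zero (t : tval) : bool := if t is Zero then true else false.
Definition is_minus (t : tval) : bool := if t is Minus then true else false.
Definition semiadjb (u v : V) : bool := (u != v) && is_zero (theta T u v).
Definition adjb (u v : V) : bool := (u != v) && ~~ is_minus (theta T u v).

Definition nbhd (v : V) : {set V} := [set u | adjb v u].

Definition clique (X : {set V}) :=
  forall u v, u \in X -> v \in X -> u <> v -> adjacent u v.
Definition strongly_stable (X : {set V}) :=
  forall u v, u \in X -> v \in X -> u <> v -> strongly_antiadjacent u v.
Definition complete := clique [set: V].

Definition is_path (k : nat) (f : 'I_k -> V) :=
  injective f /\
  forall i j : 'I_k,
    (((i : nat).+1 = j \/ (j : nat).+1 = i) -> adjacent (f i) (f j)) /\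
    (((i : nat).+1 < j \/ (j : nat).+1 < i) -> antiadjacent (f i) (f j)).

Definition cyc_adj (k i j : nat) : bool :=
  [|| i.+1 == j, j.+1 == i, (i == 0) && (j == k.-1) | (j == 0) && (i == k.-1)].

Definition is_hole (k : nat) (f : 'I_k -> V) :=
  5 <= k /\ injective f /\
  forall i j : 'I_k, i <> j ->
    (cyc_adj k i j -> adjacent (f i) (f j)) /\
    (~~ cyc_adj k i j -> antiadjacent (f i) (f j)).

(* antihole: the complement (theta negated) is a hole; adjacency in the
   complement is antiadjacency in T and vice versa *)
Definition is_antihole (k : nat) (f : 'I_k -> V) :=
  5 <= k /\ injective f /\
  forall i j : 'I_k, i <> j ->
    (cyc_adj k i j -> antiadjacent (f i) (f j)) /\
    (~~ cyc_adj k i j -> adjacent (f i) (f j)).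

Definition berge :=
  (~ exists k (f : 'I_k -> V), odd k /\ is_hole f) /\
  (~ exists k (f : 'I_k -> V), odd k /\ is_antihole f).

Definition even_pair (u v : V) :=
  strongly_antiadjacent u v /\
  forall k (f : 'I_k.+1 -> V), is_path f -> f ord0 = u -> f ord_max = v ->
    ~~ odd k.

Definition sw_edges : {set {set V}} :=
  [set [set x; y] | x in V, y in V & semiadjb x y].

Definition swD : {set V} := [set v | [exists u, semiadjb v u]].

Definition in_F :=
  berge /\
  (* (1) at most one switchable component, with at most two edges *)
  (forall x y, x \in swD -> y \in swD -> connect semiadjb x y) /\
  #|sw_edges| <= 2 /\
  (forall x y, semiadjacent x y -> #|sw_edges| = 1 ->
      nbhd x :&: nbhd y = set0) /\
  (forall v x y, #|sw_edges| = 2 -> x <> y -> semiadjacent v x -> semiadjacent v y ->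
      (forall w, w \notin [set v; x; y] -> strongly_antiadjacent v w) /\
      strongly_antiadjacent x y /\
      nbhd x :&: nbhd y = [set v]).

Definition favorable :=
  5 <= #|V| /\
  (exists u v, strongly_antiadjacent u v /\ u \notin swD /\ v \notin swD) /\
  (forall x y, semiadjacent x y -> #|sw_edges| = 1 ->
     ~ clique (~: (swD :|: nbhd x)) \/ ~ clique (~: (swD :|: nbhd y))).

Definition bipartite :=
  exists A : {set V}, strongly_stable A /\ strongly_stable (~: A).

End Defs.

(* Main.v *)
Require Import Defs.
From mathcomp Require Import all_boot zify.
From Stdlib Require Import Classical.
Set Implicit Arguments. Unset Strict Implicit. Unset Printing Implicit Defensive.

Section Aux.
Variables (V : finType) (T : trigraph V).

Lemma side S : strongly_stable T S -> strongly_stable T (~: S) ->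
  forall a b, adjacent T a b -> (b \in S) = ~~ (a \in S).
Proof.
move=> hS hC a b [ne th].
case: (boolP (a \in S)) => ha; case: (boolP (b \in S)) => hb //=.
  by case: (hS a b ha hb ne).
have ha' : a \in ~: S by rewrite in_setC.
have hb' : b \in ~: S by rewrite in_setC.
by case: (hC a b ha' hb' ne).
Qed.

Lemma parity S : strongly_stable T S -> strongly_stable T (~: S) ->
  forall k (f : 'I_k.+1 -> V), is_path T f ->
  forall i, i <= k -> (f (inord i) \in S) = (f ord0 \in S) (+) odd i.
Proof.
move=> hS hC k f [_ hf]; elim=> [|i IH] hi.
  have -> : (inord 0 : 'I_k.+1) = ord0 by apply: val_inj; rewrite /= inordK.
  by rewrite addbF.
have adj : adjacent T (f (inord i)) (f (inord i.+1)).
  apply: (hf _ _).1; left; rewrite !inordK //; lia.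
rewrite (side hS hC adj) IH; last lia.
by rewrite /= addbN.
Qed.

Lemma even_in S : strongly_stable T S -> strongly_stable T (~: S) ->
  forall a b, a <> b -> a \in S -> b \in S -> even_pair T a b.
Proof.
move=> hS hC a b ne ha hb; split; first exact: hS.
move=> k f hp f0 fk.
have := parity hS hC hp (leqnn k).
have -> : (inord k : 'I_k.+1) = ord_max by apply: val_inj; rewrite /= inordK.
by rewrite f0 fk ha hb; case: (odd k).
Qed.

Lemma same_side S : strongly_stable T S -> strongly_stable T (~: S) ->
  forall a b, a <> b -> (a \in S) = (b \in S) -> even_pair T a b.
Proof.
move=> hS hC a b ne e.
case ha: (a \in S).
  by apply: (even_in hS hC ne) => //; rewrite -e.
apply: (@even_in (~: S)) => //; first by rewrite setCK.
  by rewrite in_setC ha.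
by rewrite in_setC -e ha.
Qed.

Lemma path_shape S : strongly_stable T S -> strongly_stable T (~: S) ->
  forall u w k (f : 'I_k.+1 -> V), is_path T f -> f ord0 = u -> f ord_max = w ->
  u \in S -> w \notin S -> theta T u w = Minus ->
  exists p q, [/\ p \notin S, adjacent T u p & p <> w] /\ [/\ q \in S, adjacent T q w & q <> u].
Proof.
move=> hS hC u w k f hp f0 fk hu hw th.
have hpar := parity hS hC hp.
have ok : odd k.
  have := hpar k (leqnn k).
  have -> : (inord k : 'I_k.+1) = ord_max by apply: val_inj; rewrite /= inordK.
  by rewrite f0 fk hu (negbTE hw); case: (odd k).
have k1 : k <> 1.
  move=> k1; case: hp => _ hf.
  have := (hf ord0 ord_max).1 (or_introl (esym k1)).
  by rewrite f0 fk => -[_]; rewrite th.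
have k2 : 1 < k by case: k ok k1 {hp f f0 fk hpar} => [|[|]].
case: hp => finj hf.
exists (f (inord 1)), (f (inord k.-1)); split; split.
- by rewrite hpar ?f0 ?hu //; lia.
- rewrite -f0; apply: (hf _ _).1; left; rewrite /= inordK //; lia.
- rewrite -fk => /finj/(congr1 val); rewrite /= inordK //; lia.
- have hk : k.-1 <= k by lia.
  rewrite hpar // f0 hu; move: ok; case: k k2 {hk finj hf f f0 fk hpar k1} => //= k _.
- rewrite -fk; apply: (hf _ _).1; left; rewrite /= inordK //; lia.
- rewrite -f0 => /finj/(congr1 val); rewrite /= inordK //; lia.
Qed.


Lemma semiP x y : semiadjb T x y -> semiadjacent T x y.
Proof. rewrite /semiadjb /semiadjacent; case: (theta T x y) => //=; rewrite ?andbT ?andbF // => /eqP; done. Qed.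

Lemma semi_adj x y : semiadjb T x y -> adjacent T x y.
Proof. by case/semiP => ne th; split => //; rewrite th. Qed.

Lemma semi_sym x y : semiadjb T x y = semiadjb T y x.
Proof. by rewrite /semiadjb theta_sym eq_sym. Qed.

Lemma semi_D x y : semiadjb T x y -> x \in swD T.
Proof. by move=> h; rewrite inE; apply/existsP; exists y. Qed.

Lemma swD_edge x : x \in swD T -> exists y, semiadjb T x y /\ [set x; y] \in sw_edges T.
Proof.
rewrite inE => /existsP [y h]; exists y; split => //.
by apply/imset2P; exists x y; rewrite ?inE.
Qed.

Lemma edge_inv e : e \in sw_edges T -> exists x y, semiadjb T x y /\ e = [set x; y].
Proof. by case/imset2P => x y _; rewrite inE => /andP [_ h] ->; exists x, y. Qed.

Lemma card4 (a b c d : V) : #|[set a; b; c; d]| <= 4.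
Proof.
rewrite !cardsU !cards1; lia. Qed.


Lemma outside (A : {set V}) : #|A| < #|V| -> exists z, z \notin A.
Proof.
move=> h; have /subsetPn [z _ zA] : ~~ ([set: V] \subset A).
  by apply/negP => /subset_leq_card; rewrite cardsT; lia.
by exists z.
Qed.


Lemma hard S : strongly_stable T S -> strongly_stable T (~: S) ->
  in_F T -> 5 <= #|V| -> forall u w, u \in S -> w \notin S ->
  u \notin swD T -> w \notin swD T -> u <> w -> theta T u w = Minus ->
  (forall a b, a <> b -> a \notin swD T -> b \notin swD T -> (a \in S) = (b \in S) -> False) ->
  even_pair T u w.
Proof.
move=> hS hC hF h5 u w hu hw huD hwD uw th hno; split => // k f hp f0 fk; exfalso.
have [p [q [[pS up pw] [qS qw qu]]]] := path_shape hS hC hp f0 fk hu hw th.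
have pD : p \in swD T.
  apply/negPn/negP => pD; apply: (hno p w pw pD hwD); by rewrite (negbTE pS) (negbTE hw).
have qD : q \in swD T.
  apply/negPn/negP => qD; apply: (hno q u qu qD huD); by rewrite qS hu.
have pq : (p \in S) != (q \in S) by rewrite qS (negbTE pS).
case: hF => _ [hconn [hcard [hsmall hlight]]].
have [a [pa pE]] := swD_edge pD.
have [b [qb qE]] := swD_edge qD.
have : #|sw_edges T| = 0 \/ #|sw_edges T| = 1 \/ #|sw_edges T| = 2 by lia.
case=> [E0|[E1|E2]].
- by move: pE; rewrite (cards0_eq E0) inE.
- move/eqP/cards1P: E1 => [e He].
  move: pE qE; rewrite He !inE => /eqP pe /eqP qe.
  have qa : q = a.
    have : q \in [set q; b] by rewrite !inE eqxx.
    rewrite qe -pe !inE => /orP [/eqP qp|/eqP //].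
    by move: pq; rewrite qp eqxx.
  have [z zA] := outside (leq_ltn_trans (card4 u w p q) h5).
  move: zA; rewrite !inE => zA.
  have zD : z \in swD T.
    apply/negPn/negP => zD.
    case zS: (z \in S).
      by apply: (hno z u _ zD huD); [move=> ez; move: zA; rewrite ez eqxx | rewrite hu].
    by apply: (hno z w _ zD hwD); [move=> ez; move: zA; rewrite ez eqxx orbT | rewrite (negbTE hw)].
  have [c [zc zE]] := swD_edge zD.
  move: zE; rewrite He inE => /eqP ze.
  have : z \in [set z; c] by rewrite !inE eqxx.
  rewrite ze -pe !inE -qa => /orP [/eqP ez|/eqP ez]; move: zA; rewrite ez eqxx ?orbT //.
- have E2' := E2.
  move/eqP/cards2P: E2 => [e1 [e2 [ne He]]].
  have [e' [e'E e'ne]] : exists e', e' \in sw_edges T /\ e' != [set p; a].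
    move: (pE); rewrite He => /set2P [h|h].
      by exists e2; rewrite !inE eqxx orbT h eq_sym.
    by exists e1; rewrite !inE eqxx h.
  have [c [d [cd e'eq]]] := edge_inv e'E.
  have [t [tD tS]] : exists t, t \in swD T /\ t \notin [set p; a].
    case: (boolP (c \in [set p; a])) => hc; last by exists c; rewrite (semi_D cd).
    case: (boolP (d \in [set p; a])) => hd.
      exfalso; move: e'ne cd; rewrite e'eq.
      move: hc hd; rewrite !inE => /orP [/eqP ->|/eqP ->] /orP [/eqP ->|/eqP ->];
        rewrite /semiadjb ?eqxx //= ?[[set a; p]]setUC ?eqxx //.
    by exists d; rewrite hd; rewrite semi_sym in cd; rewrite (semi_D cd).
  have ncl : ~ closed (semiadjb T) [set p; a].
    move=> cl; have := closed_connect cl (hconn p t pD tD).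
    by rewrite (negbTE tS) !inE eqxx.
  have [x [y [xy [xS yS]]]] : exists x y, semiadjb T x y /\ x \in [set p; a] /\ y \notin [set p; a].
    apply: NNPP => H; apply: ncl => x y sxy.
    case hx: (x \in _); case hy: (y \in _) => //; exfalso; apply: H.
      by exists x, y; rewrite hy.
    by exists y, x; rewrite hx semi_sym.
  have [x' [xx' Sx]] : exists x', semiadjb T x x' /\ [set p; a] = [set x; x'].
    move: xS; rewrite !inE => /orP [/eqP ->|/eqP ->].
      by exists a.
    by exists p; rewrite semi_sym setUC.
  have x'y : x' <> y by move=> e; move: yS; rewrite Sx -e !inE eqxx orbT.
  have [hanti _] := hlight x x' y E2' x'y (semiP xx') (semiP xy).
  have XE : [set x; x'] \in sw_edges T by rewrite -Sx.
  have YE : [set x; y] \in sw_edges T by apply/imset2P; exists x y; rewrite ?inE.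
  have XY : [set x; x'] != [set x; y].
    by apply/eqP => e; move: yS; rewrite Sx e !inE eqxx orbT.
  have inD : forall z, z \in swD T -> z \in [set x; x'; y].
    move=> z zD; have [c' [zc zE]] := swD_edge zD.
    have zz : z \in [set z; c'] by rewrite !inE eqxx.
    have : [set z; c'] = [set x; x'] \/ [set z; c'] = [set x; y].
      move: XE YE zE XY; rewrite He !inE.
      by do 3! case/orP=> /eqP ->; rewrite ?eqxx //; auto.
    case=> ez; move: zz; rewrite ez !inE;
      by do 2? case/orP => /eqP ->; rewrite ?eqxx ?orbT.
  have uX : u \notin [set x; x'; y].
    apply/negP; rewrite !inE => /orP [/orP [/eqP e|/eqP e]|/eqP e]; move: huD; rewrite e.
    - by rewrite (semi_D xx').
    - by rewrite semi_sym in xx'; rewrite (semi_D xx').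
    - by rewrite semi_sym in xy; rewrite (semi_D xy).
  have wX : w \notin [set x; x'; y].
    apply/negP; rewrite !inE => /orP [/orP [/eqP e|/eqP e]|/eqP e]; move: hwD; rewrite e.
    - by rewrite (semi_D xx').
    - by rewrite semi_sym in xx'; rewrite (semi_D xx').
    - by rewrite semi_sym in xy; rewrite (semi_D xy).
  have [_ thu] := hanti u uX.
  have [_ thw] := hanti w wX.
  have sx' := side hS hC (semi_adj xx').
  have sy := side hS hC (semi_adj xy).
  have side2 : forall z, z \in [set x; x'; y] -> z <> x -> (z \in S) = (y \in S).
    move=> z; rewrite !inE => /orP [/orP [/eqP ->|/eqP ->]|/eqP ->] //.
    by rewrite sx' sy.
  have px : p <> x.
    by move=> e; case: up => _; rewrite theta_sym -e in thu.
  have qx : q <> x.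
    by move=> e; case: qw => _; rewrite e.
  by move: pq; rewrite (side2 p (inD p pD) px) (side2 q (inD q qD) qx) eqxx.
Qed.


Lemma easy S : strongly_stable T S -> strongly_stable T (~: S) ->
  forall u w, u \in S -> w \notin S -> u <> w -> theta T u w = Minus ->
  (forall a b, a <> b -> (a \in S) = (b \in S) -> False) -> even_pair T u w.
Proof.
move=> hS hC u w hu hw uw th hno; split => // k f hp f0 fk; exfalso.
have [p [q [[pS up pw] _]]] := path_shape hS hC hp f0 fk hu hw th.
by apply: (hno p w pw); rewrite (negbTE pS) (negbTE hw).
Qed.

End Aux.

Theorem theorem4p2 (V : finType) (T : trigraph V) :
  in_F T -> bipartite T ->
  (complete T \/ exists u v, even_pair T u v) /\
  (favorable T ->
     exists u v, even_pair T u v /\ u \notin swD T /\ v \notin swD T).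
Proof.
move=> hF [A [hA hC]].
have hC' : strongly_stable T (~: ~: A) by rewrite setCK.
split.
  case: (classic (complete T)) => [|nc]; [by left|right].
  have [u [v [uv th]]] : exists u v, u <> v /\ theta T u v = Minus.
    apply: NNPP => H; apply: nc => u v _ _ uv; split => // th; apply: H; exists u, v.
    by split => //; case: (theta T u v) th.
  case: (classic (exists a b, a <> b /\ (a \in A) = (b \in A))) => [[a [b [ab e]]]|H].
    by exists a, b; apply: (@same_side _ T A hA hC a b ab e).
  have hno : forall a b, a <> b -> (a \in A) = (b \in A) -> False.
    by move=> a b ab e; apply: H; exists a, b.
  exists u, v; case hu: (u \in A).
    apply: (easy hA hC) => //; apply/negP => hv; apply: (hno u v uv); by rewrite hu hv.
  apply: (easy hC hC') => //.
  - by rewrite inE hu.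
  - rewrite inE negbK; apply/negPn/negP => hv; apply: (hno u v uv); by rewrite hu (negbTE hv).
  - move=> a b ab; rewrite !inE => /(congr1 negb); rewrite !negbK; exact: hno.
move=> [h5 [[u [v [[uv th] [uD vD]]]] _]].
case: (classic (exists a b, [/\ a <> b, a \notin swD T, b \notin swD T & (a \in A) = (b \in A)]))
  => [[a [b [ab aD bD e]]]|H].
  by exists a, b; split => //; apply: (@same_side _ T A hA hC a b ab e).
have hno : forall a b, a <> b -> a \notin swD T -> b \notin swD T -> (a \in A) = (b \in A) -> False.
  by move=> a b ab aD bD e; apply: H; exists a, b.
exists u, v; split => //; case hu: (u \in A).
  apply: (hard hA hC) => //; apply/negP => hv; apply: (hno u v uv) => //; by rewrite hu hv.
apply: (hard hC hC') => //.
- by rewrite inE hu.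
- rewrite inE negbK; apply/negPn/negP => hv; apply: (hno u v uv) => //; by rewrite hu (negbTE hv).
- move=> a b ab aD bD; rewrite !inE => /(congr1 negb); rewrite !negbK; exact: hno.
Qed.
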